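(* Let $n\ge 2$, $a>1$, $p,q\in\mathbb{R}$, and let $f_t(x)$, $(t,x)\in[0,T)\times[1,a]$, be a solution of $$\dot f=u''(x)\left(\frac{f''}{1+f'^2}+(n-1)\frac{xf'-f}{x^2+f^2}\right),\qquad f_t(1)=q,\ f_t(a)=p.$$ Then there exist uniform constants $A,B$ (independent of $t$) such that $$|f_t'(1)|+|f_t'(a)|\leq Ae^{Bt}\quad\text{for all }t\in[0,T).$$
   Context: Setting: $X$ is the blowup of $\mathbb{P}^n$ at a point, $\omega=i\partial\bar\partial u(\rho)$ a Calabi-symmetric K\''ahler form in the class $a[H]-[E]$ ($\rho=\log|z|^2$ on $\mathbb{C}^n\setminus\{0\}$, $u'>0,u''>0$, with $u(\log r)-\log r$ and $u(-\log r)+a\log r$ smooth up to $r=0$ with positive derivative there). In the Legendre coordinate $x=u'(\rho)\in[1,a]$, $u''$ is a smooth function of $x$ on $[1,a]$, positive on $(1,a)$, vanishing linearly at $x=1$ and $x=a$. A Calabi-symmetric form $\alpha=i\partial\bar\partial v(\rho)$ in $p[H]-q[E]$ corresponds to $f(x)=v'(\rho)$ with $f(1)=q$, $f(a)=p$; the line bundle mean curvature flow becomes the displayed equation for $f$. *)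

(* Defs.v *)
From Stdlib Require Import Reals.
From Coquelicot Require Import Coquelicot.
Open Scope R_scope.

(* Partial derivatives of f : R -> R -> R, f t x, t = time, x = Legendre coordinate. *)
Definition dx (f : R -> R -> R) (t x : R) : R := Derive (fun y => f t y) x.
Definition dxx (f : R -> R -> R) (t x : R) : R := Derive (fun y => dx f t y) x.
Definition dt (f : R -> R -> R) (t x : R) : R := Derive (fun s => f s x) t.

Definition cont2 (g : R -> R -> R) (t x : R) : Prop :=
  continuous (fun p : R * R => g (fst p) (snd p)) (t, x).

Definition smooth (g : R -> R) : Prop := forall (k : nat) (x : R), ex_derive_n g k x.

(* Hypotheses on u'' viewed as a function phi of the Legendre coordinate x on [1,a]:
   smooth, positive on (1,a), vanishing linearly at x = 1 and x = a. *)
Definition legendre_u2 (a : R) (phi : R -> R) : Prop :=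
  smooth phi /\
  (forall x, 1 < x < a -> 0 < phi x) /\
  phi 1 = 0 /\ phi a = 0 /\
  Derive phi 1 <> 0 /\ Derive phi a <> 0.

Definition is_LMCF_solution (n : nat) (a p q : R) (phi : R -> R) (T : Rbar)
    (f : R -> R -> R) : Prop :=
  forall t x, 0 <= t -> Rbar_lt (Finite t) T -> 1 <= x <= a ->
    ex_derive (fun s => f s x) t /\
    ex_derive (fun y => f t y) x /\
    ex_derive (fun y => dx f t y) x /\
    cont2 f t x /\ cont2 (dt f) t x /\ cont2 (dx f) t x /\ cont2 (dxx f) t x /\
    dt f t x = phi x * ( dxx f t x / (1 + (dx f t x) ^ 2)
                         + (INR n - 1) * (x * dx f t x - f t x) / (x ^ 2 + (f t x) ^ 2) ) /\
    f t 1 = q /\ f t a = p.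

(* Main.v *)
Require Import Defs.
From Stdlib Require Import Reals Lra Psatz Lia.
From Coquelicot Require Import Coquelicot.
Open Scope R_scope.

Lemma cont2_eps g t x : cont2 g t x -> forall eps, 0 < eps -> exists del, 0 < del /\
  forall s y, Rabs (s - t) < del -> Rabs (y - x) < del -> Rabs (g s y - g t x) < eps.
Proof.
  intros H eps He.
  unfold cont2, continuous in H.
  destruct (proj1 (filterlim_locally _ _) H (mkposreal eps He)) as [del Hd].
  exists (pos del); split; [apply cond_pos|].
  intros s y Hs Hy.
  specialize (Hd (s, y)). simpl in Hd.
  apply Hd. split; simpl; assumption.
Qed.

Lemma cpt_of_eps f x : (forall eps, 0 < eps -> exists del, 0 < del /\
  forall y, Rabs (y - x) < del -> Rabs (f y - f x) < eps) -> continuity_pt f x.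
Proof.
  intros H. unfold continuity_pt, continue_in, limit1_in, limit_in.
  intros eps He. destruct (H eps He) as [del [Hd H2]].
  exists del; split; [exact Hd|]. intros y [_ Hy]. simpl in *. unfold R_dist in *.
  apply H2; exact Hy.
Qed.

Lemma cont2_slice g t x : cont2 g t x -> continuity_pt (g t) x.
Proof.
  intros H. apply cpt_of_eps. intros eps He.
  destruct (cont2_eps g t x H eps He) as [del [Hd H2]].
  exists del; split; [exact Hd|]. intros y Hy. apply H2; [|exact Hy].
  rewrite Rminus_diag, Rabs_R0; exact Hd.
Qed.

From Stdlib Require Import Classical ClassicalEpsilon.

Lemma unif_upper g t c d : (forall z, c <= z <= d -> cont2 g t z) ->
  forall eps, 0 < eps -> exists del, 0 < del /\ forall s y, Rabs (s - t) < del -> c <= y <= d ->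
  exists z, c <= z <= d /\ g s y < g t z + eps.
Proof.
  intros Hc eps He.
  assert (Hex : forall z, exists del : posreal, (c <= z <= d -> forall s y,
     Rabs (s - t) < del -> Rabs (y - z) < del -> Rabs (g s y - g t z) < eps)).
  { intros z. destruct (classic (c <= z <= d)) as [Hz|Hz].
    - destruct (cont2_eps g t z (Hc z Hz) eps He) as [del [Hd H2]].
      exists (mkposreal del Hd). intros _. exact H2.
    - exists (mkposreal 1 Rlt_0_1). intros Hz'. contradiction. }
  set (delta := fun z => proj1_sig (constructive_indefinite_description _ (Hex z))).
  assert (Hdelta : forall z, c <= z <= d -> forall s y,
     Rabs (s - t) < delta z -> Rabs (y - z) < delta z -> Rabs (g s y - g t z) < eps).
  { intros z. unfold delta. destruct (constructive_indefinite_description _ (Hex z)) as [dz Hdz].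
    simpl. exact Hdz. }
  destruct (compactness_value_1d c d delta) as [d0 Hd0].
  exists d0. split; [apply cond_pos|].
  intros s y Hs Hy.
  apply NNPP. intro Hn. apply (Hd0 y Hy). intros [z [Hz [Hyz Hdz]]].
  apply Hn. exists z. split; [exact Hz|].
  assert (H := Hdelta z Hz s y (Rlt_le_trans _ _ _ Hs Hdz) Hyz).
  apply Rabs_def2 in H. lra.
Qed.

Definition clamp (t1 t : R) := Rmax 0 (Rmin t t1).

Lemma clamp_in t1 t : 0 <= t1 -> 0 <= clamp t1 t <= t1.
Proof. intros H. unfold clamp, Rmax, Rmin. repeat destruct Rle_dec; lra. Qed.

Lemma clamp_id t1 t : 0 <= t <= t1 -> clamp t1 t = t.
Proof. intros H. unfold clamp, Rmax, Rmin. repeat destruct Rle_dec; lra. Qed.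

Lemma clamp_lip t1 s t : 0 <= t <= t1 -> Rabs (clamp t1 s - t) <= Rabs (s - t).
Proof.
  intros H. unfold clamp, Rmax, Rmin.
  repeat destruct Rle_dec; unfold Rabs; repeat destruct Rcase_abs; lra.
Qed.

Lemma max2d g t1 c d : 0 <= t1 -> c <= d ->
  (forall t x, 0 <= t <= t1 -> c <= x <= d -> cont2 g t x) ->
  exists t0 x0, 0 <= t0 <= t1 /\ c <= x0 <= d /\
    forall t x, 0 <= t <= t1 -> c <= x <= d -> g t x <= g t0 x0.
Proof.
  intros Ht1 Hcd Hc.
  assert (Hex : forall t, exists x, (0 <= t <= t1 -> c <= x <= d /\
            forall y, c <= y <= d -> g t y <= g t x)).
  { intros t. destruct (classic (0 <= t <= t1)) as [Ht|Ht].
    - destruct (continuity_ab_maj (g t) c d Hcd) as [Mx [H1 H2]].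
      + intros y Hy. apply cont2_slice. apply Hc; assumption.
      + exists Mx. intros _. split; assumption.
    - exists c. intros H; contradiction. }
  set (xm := fun t => proj1_sig (constructive_indefinite_description _ (Hex t))).
  assert (Hxm : forall t, 0 <= t <= t1 -> c <= xm t <= d /\
            forall y, c <= y <= d -> g t y <= g t (xm t)).
  { intros t. unfold xm. destruct (constructive_indefinite_description _ (Hex t)) as [z Hz].
    simpl. exact Hz. }
  set (m := fun s => g (clamp t1 s) (xm (clamp t1 s))).
  assert (Hm : forall t, 0 <= t <= t1 -> m t = g t (xm t)).
  { intros t Ht. unfold m. rewrite clamp_id by exact Ht. reflexivity. }
  destruct (continuity_ab_maj m 0 t1 Ht1) as [t0 [H1 H2]].
  - intros t Ht. apply cpt_of_eps. intros eps He.
    destruct (Hxm t Ht) as [Hxt Hxt'].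
    destruct (cont2_eps g t (xm t) (Hc _ _ Ht Hxt) eps He) as [d1 [Hd1 Hd1']].
    destruct (unif_upper g t c d (fun z Hz => Hc t z Ht Hz) eps He) as [d2 [Hd2 Hd2']].
    exists (Rmin d1 d2). split; [apply Rmin_pos; assumption|].
    intros y Hy. rewrite (Hm t Ht).
    pose proof (clamp_in t1 y Ht1) as Hs.
    pose proof (clamp_lip t1 y t Ht) as Hl.
    set (s := clamp t1 y) in *.
    unfold m. fold s.
    assert (Hst : Rabs (s - t) < Rmin d1 d2) by lra.
    destruct (Hxm s Hs) as [Hxs Hxs'].
    assert (Hlow := Hd1' s (xm t) (Rlt_le_trans _ _ _ Hst (Rmin_l _ _))).
    rewrite Rminus_diag, Rabs_R0 in Hlow. specialize (Hlow Hd1).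
    apply Rabs_def2 in Hlow.
    pose proof (Hxs' (xm t) Hxt).
    destruct (Hd2' s (xm s) (Rlt_le_trans _ _ _ Hst (Rmin_r _ _)) Hxs) as [z [Hz Hz']].
    pose proof (Hxt' z Hz).
    apply Rabs_def1; lra.
  - exists t0, (xm t0). destruct (Hxm t0 H2) as [Hx0 _].
    split; [exact H2|]. split; [exact Hx0|].
    intros t x Ht Hx. specialize (H1 t Ht). rewrite (Hm t Ht), (Hm t0 H2) in H1.
    destruct (Hxm t Ht) as [_ Hy]. specialize (Hy x Hx). lra.
Qed.

Lemma L_pos h x0 l : derivable_pt_lim h x0 l -> 0 < l ->
  exists del, 0 < del /\ forall s, x0 < s < x0 + del -> h x0 < h s.
Proof.
  intros H Hl. destruct (H l Hl) as [del Hd].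
  exists del. split; [apply cond_pos|]. intros s Hs.
  assert (Hh : s - x0 <> 0) by lra.
  assert (Ha : Rabs (s - x0) < del) by (rewrite Rabs_pos_eq; lra).
  specialize (Hd (s - x0) Hh Ha).
  replace (x0 + (s - x0)) with s in Hd by ring.
  apply Rabs_def2 in Hd.
  set (qq := (h s - h x0) / (s - x0)) in Hd.
  assert (E : h s - h x0 = qq * (s - x0)) by (unfold qq; field; exact Hh).
  assert (0 < qq * (s - x0)) by (apply Rmult_lt_0_compat; lra).
  lra.
Qed.

Lemma L_neg h x0 l : derivable_pt_lim h x0 l -> l < 0 ->
  exists del, 0 < del /\ forall s, x0 - del < s < x0 -> h x0 < h s.
Proof.
  intros H Hl. destruct (H (- l) ltac:(lra)) as [del Hd].
  exists del. split; [apply cond_pos|]. intros s Hs.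
  assert (Hh : s - x0 <> 0) by lra.
  assert (Ha : Rabs (s - x0) < del) by (rewrite Rabs_left; lra).
  specialize (Hd (s - x0) Hh Ha).
  replace (x0 + (s - x0)) with s in Hd by ring.
  apply Rabs_def2 in Hd.
  set (qq := (h s - h x0) / (s - x0)) in Hd.
  assert (E : h s - h x0 = (- qq) * (x0 - s)) by (unfold qq; field; exact Hh).
  assert (0 < (- qq) * (x0 - s)) by (apply Rmult_lt_0_compat; lra).
  lra.
Qed.

Lemma right_test h x0 l hi : x0 < hi -> (forall s, x0 <= s <= hi -> h s <= h x0) ->
  is_derive h x0 l -> l <= 0.
Proof.
  intros Hx Hm Hd. apply is_derive_Reals in Hd.
  destruct (Rle_or_lt l 0) as [H|H]; [exact H|].
  destruct (L_pos h x0 l Hd H) as [del [Hdel Hs]].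
  set (s := Rmin (x0 + del / 2) hi).
  assert (x0 < s <= hi) by (unfold s, Rmin; destruct Rle_dec; lra).
  assert (s < x0 + del) by (unfold s, Rmin; destruct Rle_dec; lra).
  specialize (Hs s ltac:(lra)). specialize (Hm s ltac:(lra)). lra.
Qed.

Lemma left_test h x0 l lo : lo < x0 -> (forall s, lo <= s <= x0 -> h s <= h x0) ->
  is_derive h x0 l -> 0 <= l.
Proof.
  intros Hx Hm Hd. apply is_derive_Reals in Hd.
  destruct (Rle_or_lt 0 l) as [H|H]; [exact H|].
  destruct (L_neg h x0 l Hd H) as [del [Hdel Hs]].
  set (s := Rmax (x0 - del / 2) lo).
  assert (lo <= s < x0) by (unfold s, Rmax; destruct Rle_dec; lra).
  assert (x0 - del < s) by (unfold s, Rmax; destruct Rle_dec; lra).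
  specialize (Hs s ltac:(lra)). specialize (Hm s ltac:(lra)). lra.
Qed.

Lemma first_test h x0 l lo hi : lo < x0 < hi -> (forall s, lo <= s <= hi -> h s <= h x0) ->
  is_derive h x0 l -> l = 0.
Proof.
  intros Hx Hm Hd.
  assert (l <= 0) by (apply (right_test h x0 l hi); [lra| intros; apply Hm; lra | exact Hd]).
  assert (0 <= l) by (apply (left_test h x0 l lo); [lra| intros; apply Hm; lra | exact Hd]).
  lra.
Qed.

Lemma deriv_cpt h y l : is_derive h y l -> continuity_pt h y.
Proof.
  intros H. apply continuity_pt_filterlim.
  apply (ex_derive_continuous h y). exists l; exact H.
Qed.

Lemma second_test h h1 x0 c lo hi : lo < x0 < hi ->
  (forall y, lo <= y <= hi -> h y <= h x0) ->
  (forall y, lo < y < hi -> is_derive h y (h1 y)) -> h1 x0 = 0 ->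
  is_derive h1 x0 c -> c <= 0.
Proof.
  intros Hx Hm Hd H0 Hc.
  destruct (Rle_or_lt c 0) as [H|H]; [exact H|].
  apply is_derive_Reals in Hc.
  destruct (L_pos h1 x0 c Hc H) as [del [Hdel Hs]].
  set (s := Rmin (x0 + del / 2) ((x0 + hi) / 2)).
  assert (x0 < s < hi) by (unfold s, Rmin; destruct Rle_dec; lra).
  assert (s < x0 + del) by (unfold s, Rmin; destruct Rle_dec; lra).
  set (mid := (x0 + s) / 2).
  destruct (MVT_gen h mid s h1) as [xi [Hxi Exi]].
  - intros y Hy. rewrite Rmin_left, Rmax_right in Hy by (unfold mid; lra).
    apply Hd. unfold mid in Hy; lra.
  - intros y Hy. rewrite Rmin_left, Rmax_right in Hy by (unfold mid; lra).
    apply (deriv_cpt h y (h1 y)). apply Hd. unfold mid in Hy; lra.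
  - rewrite Rmin_left, Rmax_right in Hxi by (unfold mid; lra).
    destruct (MVT_gen h x0 mid h1) as [xi' [Hxi' Exi']].
    + intros y Hy. rewrite Rmin_left, Rmax_right in Hy by (unfold mid; lra).
      apply Hd. unfold mid in Hy; lra.
    + intros y Hy. rewrite Rmin_left, Rmax_right in Hy by (unfold mid; lra).
      apply (deriv_cpt h y (h1 y)). apply Hd. unfold mid in Hy; lra.
    + rewrite Rmin_left, Rmax_right in Hxi' by (unfold mid; lra).
      assert (P1 : 0 < h1 xi) by (rewrite <- H0; apply Hs; unfold mid in Hxi; lra).
      assert (P2 : 0 <= h1 xi').
      { destruct (Req_dec xi' x0) as [E|E]. rewrite E; lra.
        left. rewrite <- H0. apply Hs. unfold mid in Hxi'; lra. }
      assert (0 < h1 xi * (s - mid)) by (apply Rmult_lt_0_compat; unfold mid; lra).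
      assert (0 <= h1 xi' * (mid - x0)) by (apply Rmult_le_pos; unfold mid; lra).
      specialize (Hm s ltac:(lra)). lra.
Qed.

Lemma Zlip a0 x P pp y1 y2 : 1 <= x <= a0 -> Rabs pp <= P -> y2 < y1 ->
  (x * pp - y1) / (x ^ 2 + y1 ^ 2) - (x * pp - y2) / (x ^ 2 + y2 ^ 2)
  <= (2 * a0 * P + 2) * (y1 - y2).
Proof.
  intros Hx HP Hy.
  set (D1 := x ^ 2 + y1 ^ 2). set (D2 := x ^ 2 + y2 ^ 2).
  assert (HD1 : 1 + y1 ^ 2 <= D1) by (unfold D1; nra).
  assert (HD2 : 1 + y2 ^ 2 <= D2) by (unfold D2; nra).
  set (Br := y1 * y2 - x ^ 2 - x * pp * (y1 + y2)).
  assert (E : (x * pp - y1) / D1 - (x * pp - y2) / D2 = (y1 - y2) * (Br / (D1 * D2))).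
  { unfold Br, D1, D2. field. split; nra. }
  rewrite E.
  assert (HP0 : 0 <= P) by (pose proof (Rabs_pos pp); lra).
  assert (A1 : Rabs y1 <= D1 * D2).
  { assert (Rabs y1 <= 1 + y1 ^ 2).
    { unfold Rabs; destruct Rcase_abs; nra. }
    nra. }
  assert (A2 : Rabs y2 <= D1 * D2).
  { assert (Rabs y2 <= 1 + y2 ^ 2).
    { unfold Rabs; destruct Rcase_abs; nra. }
    nra. }
  assert (A3 : y1 * y2 <= D1 * D2) by nra.
  assert (A4 : - (x * pp * (y1 + y2)) <= a0 * P * (Rabs y1 + Rabs y2)).
  { assert (Rabs (x * pp * (y1 + y2)) <= a0 * P * (Rabs y1 + Rabs y2)).
    { rewrite !Rabs_mult. rewrite (Rabs_pos_eq x) by lra.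
      pose proof (Rabs_triang y1 y2). pose proof (Rabs_pos pp).
      pose proof (Rabs_pos (y1 + y2)).
      apply Rle_trans with (a0 * P * Rabs (y1 + y2)).
      - apply Rmult_le_compat_r; [assumption|]. apply Rmult_le_compat; lra.
      - apply Rmult_le_compat_l; [nra|assumption]. }
    pose proof (Rabs_maj2 (x * pp * (y1 + y2))). lra. }
  assert (HBr : Br <= (2 * a0 * P + 2) * (D1 * D2)).
  { assert (0 <= a0 * P) by (apply Rmult_le_pos; lra).
    assert (a0 * P * Rabs y1 <= a0 * P * (D1 * D2)) by (apply Rmult_le_compat_l; assumption).
    assert (a0 * P * Rabs y2 <= a0 * P * (D1 * D2)) by (apply Rmult_le_compat_l; assumption).
    assert (0 <= x ^ 2) by (apply pow2_ge_0).
    unfold Br; clear E; clearbody D1 D2; nra. }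
  assert (HDD : 0 < D1 * D2) by nra.
  assert (Br / (D1 * D2) <= 2 * a0 * P + 2).
  { apply (Rmult_le_reg_r (D1 * D2)); [exact HDD|].
    unfold Rdiv. rewrite Rmult_assoc, Rinv_l by lra. lra. }
  rewrite (Rmult_comm (2 * a0 * P + 2)). apply Rmult_le_compat_l; lra.
Qed.

Lemma cont2_G (f w : R -> R -> R) lam t x : cont2 f t x -> cont2 w t x ->
  cont2 (fun t x => exp (- lam * t) * (f t x - w t x)) t x.
Proof.
  intros Hf Hw. unfold cont2 in *. simpl.
  apply (continuous_mult (fun p : R * R => exp (- lam * fst p))
                         (fun p : R * R => f (fst p) (snd p) - w (fst p) (snd p))).
  - apply (continuous_comp (fun p : R * R => fst p) (fun s => exp (-lam*s))).
    apply continuous_fst. simpl. apply (@ex_derive_continuous R_AbsRing R_NormedModule).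
    auto_derive. auto.
  - apply (continuous_plus (fun p : R * R => f (fst p) (snd p))
                           (fun p : R * R => - w (fst p) (snd p))).
    exact Hf. apply (continuous_opp (fun p : R * R => w (fst p) (snd p))). exact Hw.
Qed.

Lemma comparison n a p q phi T f w wt wx Cphi :
  (1 <= n)%nat -> 1 < a -> is_LMCF_solution n a p q phi T f ->
  (forall x, 1 <= x <= a -> 0 <= phi x <= Cphi) ->
  (forall t x, is_derive (fun s => w s x) t (wt t x)) ->
  (forall t x, is_derive (fun y => w t y) x (wx t x)) ->
  (forall t x, is_derive (fun y => wx t y) x 0) ->
  (forall t x, cont2 w t x) ->
  (forall t1, exists P, forall t x, 0 <= t <= t1 -> 1 <= x <= a -> Rabs (wx t x) <= P) ->
  (forall t x, 0 <= t -> 1 <= x <= a ->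
     phi x * ((INR n - 1) * (x * wx t x - w t x) / (x ^ 2 + (w t x) ^ 2)) <= wt t x) ->
  (forall x, 1 <= x <= a -> f 0 x <= w 0 x) ->
  (forall t, 0 <= t -> Rbar_lt t T -> q <= w t 1 /\ p <= w t a) ->
  forall t x, 0 <= t -> Rbar_lt t T -> 1 <= x <= a -> f t x <= w t x.
Proof.
  intros Hn Ha Hsol Hphi Hwt Hwx Hwxx Hwc HP Hsup H0 Hbd t1 x1 Ht1 HT1 Hx1.
  destruct (HP t1) as [P HP'].
  assert (HP0 : 0 <= P) by (specialize (HP' t1 a ltac:(lra) ltac:(lra)); pose proof (Rabs_pos (wx t1 a)); lra).
  assert (Hn1 : 0 <= INR n - 1) by (apply le_INR in Hn; simpl in Hn; lra).
  assert (HC0 : 0 <= Cphi) by (specialize (Hphi 1 ltac:(lra)); lra).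
  set (Lam := 2 * a * P + 2).
  set (lam := Cphi * (INR n - 1) * Lam + 1).
  set (G := fun t x => exp (- lam * t) * (f t x - w t x)).
  assert (HTt : forall t, 0 <= t <= t1 -> Rbar_lt t T).
  { intros t Ht. apply Rbar_le_lt_trans with t1; [simpl; lra | exact HT1]. }
  destruct (max2d G t1 1 a Ht1 ltac:(lra)) as [t0 [x0 [Ht0 [Hx0 Hmax]]]].
  { intros t x Ht Hx. unfold G. apply cont2_G; [|apply Hwc].
    destruct (Hsol t x ltac:(lra) (HTt t Ht) Hx) as [_ [_ [_ [C _]]]]. exact C. }
  assert (Hexp : forall s, 0 < exp (- lam * s)) by (intros; apply exp_pos).
  destruct (Rle_or_lt (G t0 x0) 0) as [Hle|Hgt].
  { specialize (Hmax t1 x1 ltac:(lra) Hx1). unfold G in Hmax, Hle. cbv beta in Hmax, Hle.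
    specialize (Hexp t1).
    destruct (Rle_or_lt (f t1 x1) (w t1 x1)) as [?|Hc]; [assumption|].
    assert (0 < exp (- lam * t1) * (f t1 x1 - w t1 x1)) by (apply Rmult_lt_0_compat; lra).
    lra. }
  exfalso.
  assert (HFW : w t0 x0 < f t0 x0).
  { unfold G in Hgt. specialize (Hexp t0).
    destruct (Rle_or_lt (f t0 x0) (w t0 x0)) as [Hc|Hc]; [|exact Hc].
    assert (exp (- lam * t0) * (f t0 x0 - w t0 x0) <= 0).
    { rewrite <- (Rmult_0_r (exp (- lam * t0))). apply Rmult_le_compat_l; lra. }
    lra. }
  assert (HT0 := HTt t0 Ht0).
  assert (Ht0p : 0 < t0).
  { destruct (Req_dec t0 0) as [E|E]; [|lra].
    subst t0. specialize (H0 x0 Hx0). lra. }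
  assert (Hx0i : 1 < x0 < a).
  { destruct (Hbd t0 ltac:(lra) HT0) as [Hb1 Hba].
    destruct (Req_dec x0 1) as [E|E].
    { subst x0. destruct (Hsol t0 1 ltac:(lra) HT0 ltac:(lra)) as [_ [_ [_ [_ [_ [_ [_ [_ [E1 _]]]]]]]]].
      lra. }
    destruct (Req_dec x0 a) as [E'|E'].
    { subst x0. destruct (Hsol t0 a ltac:(lra) HT0 ltac:(lra)) as [_ [_ [_ [_ [_ [_ [_ [_ [_ Ea]]]]]]]]].
      lra. }
    lra. }
  set (ee := exp (- lam * t0)).
  assert (Hee : 0 < ee) by apply Hexp.
  destruct (Hsol t0 x0 ltac:(lra) HT0 Hx0) as [Hdt [Hdx [Hdxx [_ [_ [_ [_ [Eq _]]]]]]]].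
  set (h1 := fun y => ee * (dx f t0 y - wx t0 y)).
  assert (Hh : forall y, 1 < y < a -> is_derive (G t0) y (h1 y)).
  { intros y Hy. unfold G, h1. fold ee. apply is_derive_scal.
    apply (is_derive_minus (fun y => f t0 y) (fun y => w t0 y)).
    - apply Derive_correct.
      destruct (Hsol t0 y ltac:(lra) HT0 ltac:(lra)) as [_ [D _]]. exact D.
    - apply Hwx. }
  assert (Hm1 : forall y, 1 <= y <= a -> G t0 y <= G t0 x0) by (intros; apply Hmax; lra).
  assert (E1 : h1 x0 = 0) by (apply (first_test (G t0) x0 (h1 x0) 1 a); [lra | exact Hm1 | apply Hh; lra]).
  assert (Hpp : dx f t0 x0 = wx t0 x0).
  { unfold h1 in E1. apply Rmult_integral in E1. destruct E1; lra. }
  assert (Hc2 : ee * (dxx f t0 x0 - 0) <= 0).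
  { apply (second_test (G t0) h1 x0 _ 1 a); [lra | exact Hm1 | exact Hh | exact E1 |].
    unfold h1. apply is_derive_scal.
    apply (is_derive_minus (fun y => dx f t0 y) (fun y => wx t0 y)).
    - apply Derive_correct. exact Hdxx.
    - apply Hwxx. }
  assert (HD : dxx f t0 x0 <= 0).
  { destruct (Rle_or_lt (dxx f t0 x0) 0) as [?|Hc]; [assumption|].
    assert (0 < ee * (dxx f t0 x0 - 0)) by (apply Rmult_lt_0_compat; lra). lra. }
  assert (Hk : is_derive (fun s => G s x0) t0
      ((- lam * ee) * (f t0 x0 - w t0 x0) + ee * (dt f t0 x0 - wt t0 x0))).
  { unfold G, ee. apply (is_derive_mult (fun s => exp (- lam * s)) (fun s => f s x0 - w s x0)).
    - auto_derive. auto. ring.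
    - apply (is_derive_minus (fun s => f s x0) (fun s => w s x0)).
      + apply Derive_correct. exact Hdt.
      + apply Hwt.
    - intros; apply Rmult_comm. }
  assert (Hl := left_test (fun s => G s x0) t0 _ 0 Ht0p ltac:(intros; apply Hmax; lra) Hk).
  simpl in Hl.
  assert (Hl2 : lam * (f t0 x0 - w t0 x0) <= dt f t0 x0 - wt t0 x0).
  { assert (0 <= ee * (dt f t0 x0 - wt t0 x0 - lam * (f t0 x0 - w t0 x0))) by (rewrite Rmult_minus_distr_l; lra).
    destruct (Rle_or_lt (lam * (f t0 x0 - w t0 x0)) (dt f t0 x0 - wt t0 x0)) as [?|Hc]; [assumption|].
    assert (ee * (dt f t0 x0 - wt t0 x0 - lam * (f t0 x0 - w t0 x0)) < 0).
    { rewrite <- (Rmult_0_r ee). apply Rmult_lt_compat_l; lra. }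
    lra. }
  set (pp := wx t0 x0) in *.
  set (F := f t0 x0) in *. set (W := w t0 x0) in *.
  assert (HZ := Zlip a x0 P pp F W ltac:(lra) (HP' t0 x0 ltac:(lra) Hx0) HFW).
  fold Lam in HZ.
  specialize (Hsup t0 x0 ltac:(lra) Hx0). fold W pp in Hsup.
  rewrite Hpp in Eq. fold F in Eq.
  destruct (Hphi x0 Hx0) as [Hph0 HphC].
  assert (Hterm : phi x0 * (dxx f t0 x0 / (1 + pp ^ 2)) <= 0).
  { assert (0 < 1 + pp ^ 2) by (pose proof (pow2_ge_0 pp); lra).
    assert (dxx f t0 x0 / (1 + pp ^ 2) <= 0).
    { unfold Rdiv. rewrite <- (Rmult_0_l (/ (1 + pp ^ 2))). apply Rmult_le_compat_r.
      left; apply Rinv_0_lt_compat; lra. exact HD. }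
    rewrite <- (Rmult_0_r (phi x0)). apply Rmult_le_compat_l; lra. }
  set (ZF := (x0 * pp - F) / (x0 ^ 2 + F ^ 2)) in *.
  set (ZW := (x0 * pp - W) / (x0 ^ 2 + W ^ 2)) in *.
  assert (EF : (INR n - 1) * (x0 * pp - F) / (x0 ^ 2 + F ^ 2) = (INR n - 1) * ZF) by (unfold ZF, Rdiv; ring).
  assert (EW : (INR n - 1) * (x0 * pp - W) / (x0 ^ 2 + W ^ 2) = (INR n - 1) * ZW) by (unfold ZW, Rdiv; ring).
  rewrite EF in Eq. rewrite EW in Hsup.
  assert (Hdiff : dt f t0 x0 - wt t0 x0 <= phi x0 * ((INR n - 1) * (ZF - ZW))).
  { rewrite Eq. rewrite Rmult_plus_distr_l. 
    assert (phi x0 * ((INR n - 1) * (ZF - ZW)) = phi x0 * ((INR n - 1) * ZF) - phi x0 * ((INR n - 1) * ZW)) by ring.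
    lra. }
  assert (HLam : 0 <= Lam) by (unfold Lam; assert (0 <= a * P) by (apply Rmult_le_pos; lra); lra).
  assert (Hb1 : phi x0 * ((INR n - 1) * (ZF - ZW)) <= phi x0 * ((INR n - 1) * (Lam * (F - W)))).
  { apply Rmult_le_compat_l; [exact Hph0|]. apply Rmult_le_compat_l; [exact Hn1 | exact HZ]. }
  assert (Hb2 : phi x0 * ((INR n - 1) * (Lam * (F - W))) <= Cphi * ((INR n - 1) * (Lam * (F - W)))).
  { apply Rmult_le_compat_r; [|exact HphC]. apply Rmult_le_pos; [exact Hn1|].
    apply Rmult_le_pos; lra. }
  assert (Efin : lam * (F - W) = Cphi * ((INR n - 1) * (Lam * (F - W))) + (F - W)) by (unfold lam; ring).
  lra.
Qed.

Lemma exp_mono x y : x <= y -> exp x <= exp y.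
Proof. intros [H|H]; [left; apply exp_increasing; exact H | subst; lra]. Qed.

Lemma exp_ge1 x : 0 <= x -> 1 <= exp x.
Proof. intros H. pose proof (exp_ineq1_le x). lra. Qed.

Lemma abs_bound g c d : c <= d -> (forall x, c <= x <= d -> continuity_pt g x) ->
  exists M, 0 <= M /\ forall x, c <= x <= d -> Rabs (g x) <= M.
Proof.
  intros Hcd Hc.
  destruct (continuity_ab_maj (fun x => Rabs (g x)) c d Hcd) as [Mx [H1 H2]].
  - intros x Hx. apply (continuity_pt_comp g Rabs x (Hc x Hx)). apply Rcontinuity_abs.
  - exists (Rabs (g Mx)). split; [apply Rabs_pos| exact H1].
Qed.

Lemma phi_bounds a phi : 1 < a -> legendre_u2 a phi ->
  exists C, 0 <= C /\ forall x, 1 <= x <= a ->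
    0 <= phi x /\ phi x <= C * (x - 1) /\ phi x <= C * (a - x).
Proof.
  intros Ha [Hs [Hpos [H1 [Ha0 _]]]].
  destruct (abs_bound (Derive phi) 1 a ltac:(lra)) as [C [HC HCb]].
  { intros x Hx. apply continuity_pt_filterlim.
    apply (@ex_derive_continuous R_AbsRing R_NormedModule). exact (Hs 2%nat x). }
  exists C. split; [exact HC|]. intros x Hx.
  assert (Hd : forall y, is_derive phi y (Derive phi y)).
  { intros y. apply Derive_correct. exact (Hs 1%nat y). }
  assert (Hcp : forall y, continuity_pt phi y) by (intros y; apply (deriv_cpt phi y _ (Hd y))).
  split.
  { destruct (Req_dec x 1) as [E|E]; [subst; lra|].
    destruct (Req_dec x a) as [E'|E']; [subst; lra|].
    left; apply Hpos; lra. }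
  split.
  - destruct (MVT_gen phi 1 x (Derive phi)) as [xi [Hxi Exi]].
    + intros; apply Hd.
    + intros; apply Hcp.
    + rewrite Rmin_left, Rmax_right in Hxi by lra.
      specialize (HCb xi ltac:(lra)). rewrite H1 in Exi.
      assert (Derive phi xi * (x - 1) <= C * (x - 1)).
      { apply Rmult_le_compat_r; [lra|]. pose proof (Rle_abs (Derive phi xi)); lra. }
      lra.
  - destruct (MVT_gen phi x a (Derive phi)) as [xi [Hxi Exi]].
    + intros; apply Hd.
    + intros; apply Hcp.
    + rewrite Rmin_left, Rmax_right in Hxi by lra.
      specialize (HCb xi ltac:(lra)). rewrite Ha0 in Exi.
      assert (- Derive phi xi * (a - x) <= C * (a - x)).
      { apply Rmult_le_compat_r; [lra|]. pose proof (Rabs_maj2 (Derive phi xi)); lra. }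
      lra.
Qed.

Lemma super_help phi0 C d nn D N Nb Bk : 0 <= phi0 -> phi0 <= C * d -> 0 <= d -> 0 <= C ->
  0 <= nn -> 1 <= D -> Rabs N <= Nb -> C * nn * Nb <= Bk ->
  phi0 * (nn * N / D) <= d * Bk.
Proof.
  intros H1 H2 H3 H4 H5 H6 H7 H8.
  assert (E : nn * N / D = nn * (N / D)) by (unfold Rdiv; ring).
  rewrite E.
  assert (HND : N / D <= Rabs N).
  { unfold Rdiv. pose proof (Rle_abs N). pose proof (Rabs_pos N).
    assert (0 < / D) by (apply Rinv_0_lt_compat; lra).
    assert (/ D <= 1) by (rewrite <- Rinv_1; apply Rinv_le_contravar; lra).
    destruct (Rle_or_lt 0 N).
    - assert (N * / D <= N * 1) by (apply Rmult_le_compat_l; lra). lra.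
    - assert (N * / D < 0) by (apply Rmult_neg_pos; lra). lra. }
  assert (nn * (N / D) <= nn * Nb) by (apply Rmult_le_compat_l; lra).
  assert (0 <= Nb) by (pose proof (Rabs_pos N); lra).
  assert (phi0 * (nn * (N / D)) <= phi0 * (nn * Nb)) by (apply Rmult_le_compat_l; lra).
  assert (phi0 * (nn * Nb) <= C * d * (nn * Nb)) by (apply Rmult_le_compat_r; [apply Rmult_le_pos|]; lra).
  assert (C * d * (nn * Nb) = d * (C * nn * Nb)) by ring.
  assert (d * (C * nn * Nb) <= d * Bk) by (apply Rmult_le_compat_l; lra).
  lra.
Qed.

Definition bar (c0 K B s r : R) (t x : R) := c0 + K * exp (B * t) * (s * x + r).

Lemma bar_dt c0 K B s r t x : is_derive (fun t' => bar c0 K B s r t' x) t (K * (B * exp (B * t)) * (s * x + r)).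
Proof. unfold bar. auto_derive; [auto | ring]. Qed.

Lemma bar_dx c0 K B s r t x : is_derive (fun y => bar c0 K B s r t y) x (K * exp (B * t) * s).
Proof. unfold bar. auto_derive; [auto | ring]. Qed.

Lemma bar_dxx K B s t x : is_derive (fun y : R => K * exp (B * t) * s) x 0.
Proof. auto_derive; [auto | ring]. Qed.

Lemma bar_cont c0 K B s r t x : cont2 (bar c0 K B s r) t x.
Proof.
  unfold cont2, bar. simpl.
  apply (continuous_plus (fun _ : R * R => c0) (fun p : R * R => K * exp (B * fst p) * (s * snd p + r))).
  apply continuous_const.
  apply (continuous_mult (fun p : R * R => K * exp (B * fst p)) (fun p : R * R => s * snd p + r)).
  - apply (continuous_mult (fun _ : R * R => K) (fun p : R * R => exp (B * fst p))).
    apply continuous_const.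
    apply (continuous_comp (fun p : R * R => fst p) (fun s => exp (B*s))).
    apply continuous_fst. simpl. apply (@ex_derive_continuous R_AbsRing R_NormedModule).
    auto_derive. auto.
  - apply (continuous_comp (fun p : R * R => snd p) (fun y => s * y + r)).
    apply continuous_snd. simpl. apply (@ex_derive_continuous R_AbsRing R_NormedModule).
    auto_derive. auto.
Qed.

Lemma init_bound n a p q phi T f : 1 < a -> is_LMCF_solution n a p q phi T f -> Rbar_lt 0 T ->
  exists M0, 0 <= M0 /\ forall x, 1 <= x <= a -> f 0 x <= q + M0 * (x - 1) /\ f 0 x <= p + M0 * (a - x).
Proof.
  intros Ha Hsol HT.
  assert (S0 : forall x, 1 <= x <= a -> _) by (intros x Hx; exact (Hsol 0 x (Rle_refl 0) HT Hx)).
  destruct (abs_bound (dx f 0) 1 a ltac:(lra)) as [M0 [HM0 HMb]].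
  { intros x Hx. apply cont2_slice. destruct (S0 x Hx) as [_ [_ [_ [_ [_ [C _]]]]]]. exact C. }
  exists M0. split; [exact HM0|]. intros x Hx.
  assert (Hd : forall y, 1 <= y <= a -> is_derive (f 0) y (dx f 0 y)).
  { intros y Hy. apply Derive_correct. destruct (S0 y Hy) as [_ [D _]]. exact D. }
  destruct (S0 x Hx) as [_ [_ [_ [_ [_ [_ [_ [_ [E1 Ea]]]]]]]]].
  split.
  - destruct (MVT_gen (f 0) 1 x (dx f 0)) as [xi [Hxi Exi]].
    + intros y Hy. rewrite Rmin_left, Rmax_right in Hy by lra. apply Hd; lra.
    + intros y Hy. rewrite Rmin_left, Rmax_right in Hy by lra. apply (deriv_cpt _ _ _ (Hd y ltac:(lra))).
    + rewrite Rmin_left, Rmax_right in Hxi by lra.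
      specialize (HMb xi ltac:(lra)).
      assert (dx f 0 xi * (x - 1) <= M0 * (x - 1)).
      { apply Rmult_le_compat_r; [lra|]. pose proof (Rle_abs (dx f 0 xi)); lra. }
      lra.
  - destruct (MVT_gen (f 0) x a (dx f 0)) as [xi [Hxi Exi]].
    + intros y Hy. rewrite Rmin_left, Rmax_right in Hy by lra. apply Hd; lra.
    + intros y Hy. rewrite Rmin_left, Rmax_right in Hy by lra. apply (deriv_cpt _ _ _ (Hd y ltac:(lra))).
    + rewrite Rmin_left, Rmax_right in Hxi by lra.
      specialize (HMb xi ltac:(lra)).
      assert (- dx f 0 xi * (a - x) <= M0 * (a - x)).
      { apply Rmult_le_compat_r; [lra|]. pose proof (Rabs_maj2 (dx f 0 xi)); lra. }
      lra.
Qed.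

Lemma onesided n a p q phi T f : (2 <= n)%nat -> 1 < a -> legendre_u2 a phi ->
  is_LMCF_solution n a p q phi T f -> Rbar_lt 0 T ->
  exists K B, 0 <= K /\ 0 <= B /\ forall t, 0 <= t -> Rbar_lt t T ->
    dx f t 1 <= K * exp (B * t) /\ - (K * exp (B * t)) <= dx f t a.
Proof.
  intros Hn Ha Hphi Hsol HT.
  destruct (phi_bounds a phi Ha Hphi) as [C [HC Hpb]].
  destruct (init_bound n a p q phi T f Ha Hsol HT) as [M0 [HM0 Hib]].
  assert (Hnn : 1 <= INR n - 1) by (apply le_INR in Hn; simpl in Hn; lra).
  assert (Hn1 : (1 <= n)%nat) by lia.
  remember (INR n - 1) as nn eqn:Enn.
  pose proof (Rabs_pos p) as Hp0. pose proof (Rabs_pos q) as Hq0.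
  set (K := M0 + 1 + (Rabs p + Rabs q) / (a - 1)).
  assert (HKa : K * (a - 1) = (M0 + 1) * (a - 1) + (Rabs p + Rabs q)) by (unfold K; field; lra).
  assert (HK1 : 1 <= K).
  { unfold K. assert (0 <= (Rabs p + Rabs q) / (a - 1)) by (apply Rdiv_le_0_compat; lra). lra. }
  assert (HKM : M0 <= K).
  { unfold K. assert (0 <= (Rabs p + Rabs q) / (a - 1)) by (apply Rdiv_le_0_compat; lra). lra. }
  clearbody K.
  remember (C * nn * (a + Rabs p + Rabs q + 1)) as B eqn:EB.
  assert (HB : 0 <= B) by (rewrite EB; apply Rmult_le_pos; [apply Rmult_le_pos|]; lra).
  assert (He : forall t, 0 <= t -> 1 <= exp (B * t)) by (intros; apply exp_ge1; apply Rmult_le_pos; lra).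
  assert (HP : forall t1, exists P, forall t x, 0 <= t <= t1 -> 1 <= x <= a -> Rabs (K * exp (B * t) * 1) <= P).
  { intros t1. exists (K * exp (B * t1)). intros t x Ht Hx.
    rewrite Rmult_1_r. rewrite Rabs_pos_eq by (apply Rmult_le_pos; [lra | left; apply exp_pos]).
    apply Rmult_le_compat_l; [lra|]. apply exp_mono. apply Rmult_le_compat_l; lra. }
  assert (HP2 : forall t1, exists P, forall t x, 0 <= t <= t1 -> 1 <= x <= a -> Rabs (K * exp (B * t) * -1) <= P).
  { intros t1. destruct (HP t1) as [P HP']. exists P. intros t x Ht Hx.
    specialize (HP' t x Ht Hx). rewrite Rmult_1_r in HP'.
    replace (K * exp (B * t) * -1) with (- (K * exp (B * t))) by ring. rewrite Rabs_Ropp. exact HP'. }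
  assert (Hphi' : forall x, 1 <= x <= a -> 0 <= phi x <= C * (a - 1)).
  { intros x Hx. destruct (Hpb x Hx) as [H1 [H2 _]].
    assert (C * (x - 1) <= C * (a - 1)) by (apply Rmult_le_compat_l; lra). lra. }
  assert (Cmp1 := comparison n a p q phi T f (bar q K B 1 (-1))
     (fun t x => K * (B * exp (B * t)) * (1 * x + -1)) (fun t x => K * exp (B * t) * 1)
     (C * (a - 1)) Hn1 Ha Hsol Hphi'
     (fun t x => bar_dt q K B 1 (-1) t x) (fun t x => bar_dx q K B 1 (-1) t x)
     (fun t x => bar_dxx K B 1 t x) (bar_cont q K B 1 (-1)) HP).
  assert (Cmp2 := comparison n a p q phi T f (bar p K B (-1) a)
     (fun t x => K * (B * exp (B * t)) * (-1 * x + a)) (fun t x => K * exp (B * t) * -1)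
     (C * (a - 1)) Hn1 Ha Hsol Hphi'
     (fun t x => bar_dt p K B (-1) a t x) (fun t x => bar_dx p K B (-1) a t x)
     (fun t x => bar_dxx K B (-1) t x) (bar_cont p K B (-1) a) HP2).
  rewrite <- Enn in Cmp1, Cmp2.
  assert (W1 : forall t x, 0 <= t -> Rbar_lt t T -> 1 <= x <= a -> f t x <= bar q K B 1 (-1) t x).
  { apply Cmp1.
    - intros t x Ht Hx. unfold bar.
      set (e := exp (B * t)). assert (1 <= e) by (apply He; lra).
      destruct (Hpb x Hx) as [H1 [H2 _]].
      replace (K * (B * e) * (1 * x + -1)) with ((x - 1) * (K * (B * e))) by ring.
      apply (super_help _ C _ _ _ _ (K * e + Rabs q)); try lra.
      + pose proof (pow2_ge_0 (q + K * e * (1 * x + -1))). nra.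
      + replace (x * (K * e * 1) - (q + K * e * (1 * x + -1))) with (K * e - q) by ring.
        assert (0 <= K * e) by (apply Rmult_le_pos; lra).
        unfold Rminus. pose proof (Rabs_triang (K * e) (- q)). rewrite Rabs_Ropp in *. rewrite (Rabs_pos_eq (K * e)) in * by lra. lra.
      + assert (Rabs q <= Rabs q * (K * e)) by (pose proof (Rmult_le_compat_l (Rabs q) 1 (K * e) Hq0 ltac:(nra)); lra).
        assert (0 <= (a + Rabs p) * (K * e)) by (apply Rmult_le_pos; nra).
        assert (K * e + Rabs q <= (a + Rabs p + Rabs q + 1) * (K * e)) by nra.
        assert (0 <= C * nn) by (apply Rmult_le_pos; lra).
        assert (C * nn * (K * e + Rabs q) <= C * nn * ((a + Rabs p + Rabs q + 1) * (K * e)))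
          by (apply Rmult_le_compat_l; lra).
        replace (K * (B * e)) with (C * nn * ((a + Rabs p + Rabs q + 1) * (K * e))) by (rewrite EB; ring).
        lra.
    - intros x Hx. destruct (Hib x Hx) as [H1 _]. unfold bar.
      rewrite Rmult_0_r, exp_0.
      assert (M0 * (x - 1) <= K * (x - 1)) by (apply Rmult_le_compat_r; lra).
      replace (K * 1 * (1 * x + -1)) with (K * (x - 1)) by ring. lra.
    - intros t Ht HtT. unfold bar. set (e := exp (B * t)). assert (1 <= e) by (apply He; lra).
      split; [lra|].
      assert (K * (a - 1) <= K * e * (a - 1)) by (apply Rmult_le_compat_r; nra).
      pose proof (Rle_abs p). pose proof (Rabs_maj2 q).
      assert (0 <= (M0 + 1) * (a - 1)) by nra.
      replace (1 * a + -1) with (a - 1) by ring. lra. }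
  assert (W2 : forall t x, 0 <= t -> Rbar_lt t T -> 1 <= x <= a -> f t x <= bar p K B (-1) a t x).
  { apply Cmp2.
    - intros t x Ht Hx. unfold bar.
      set (e := exp (B * t)). assert (1 <= e) by (apply He; lra).
      destruct (Hpb x Hx) as [H1 [_ H2]].
      replace (K * (B * e) * (-1 * x + a)) with ((a - x) * (K * (B * e))) by ring.
      apply (super_help _ C _ _ _ _ (K * e * a + Rabs p)); try lra.
      + pose proof (pow2_ge_0 (p + K * e * (-1 * x + a))). nra.
      + replace (x * (K * e * -1) - (p + K * e * (-1 * x + a))) with (- (K * e * a + p)) by ring.
        rewrite Rabs_Ropp.
        assert (0 <= K * e * a) by (apply Rmult_le_pos; [apply Rmult_le_pos|]; lra).
        pose proof (Rabs_triang (K * e * a) p). rewrite (Rabs_pos_eq (K * e * a)) in * by lra. lra.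
      + assert (Rabs p <= Rabs p * (K * e)) by (pose proof (Rmult_le_compat_l (Rabs p) 1 (K * e) Hp0 ltac:(nra)); lra).
        assert (0 <= (Rabs q + 1) * (K * e)) by (apply Rmult_le_pos; nra).
        assert (K * e * a + Rabs p <= (a + Rabs p + Rabs q + 1) * (K * e)) by nra.
        assert (0 <= C * nn) by (apply Rmult_le_pos; lra).
        assert (C * nn * (K * e * a + Rabs p) <= C * nn * ((a + Rabs p + Rabs q + 1) * (K * e)))
          by (apply Rmult_le_compat_l; lra).
        replace (K * (B * e)) with (C * nn * ((a + Rabs p + Rabs q + 1) * (K * e))) by (rewrite EB; ring).
        lra.
    - intros x Hx. destruct (Hib x Hx) as [_ H1]. unfold bar.
      rewrite Rmult_0_r, exp_0.
      assert (M0 * (a - x) <= K * (a - x)) by (apply Rmult_le_compat_r; lra).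
      replace (-1 * x + a) with (a - x) by ring. lra.
    - intros t Ht HtT. unfold bar. set (e := exp (B * t)). assert (1 <= e) by (apply He; lra).
      split; [|replace (-1 * a + a) with 0 by ring; lra].
      assert (K * (a - 1) <= K * e * (a - 1)) by (apply Rmult_le_compat_r; nra).
      pose proof (Rle_abs q). pose proof (Rabs_maj2 p).
      assert (0 <= (M0 + 1) * (a - 1)) by nra.
      replace (-1 * 1 + a) with (a - 1) by ring. lra. }
  exists K, B. split; [lra|]. split; [exact HB|].
  intros t Ht HtT.
  destruct (Hsol t 1 Ht HtT ltac:(lra)) as [_ [D1 [_ [_ [_ [_ [_ [_ [E1 _]]]]]]]]].
  destruct (Hsol t a Ht HtT ltac:(lra)) as [_ [Da [_ [_ [_ [_ [_ [_ [_ Ea]]]]]]]]].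
  split.
  - assert (Hd : is_derive (fun y => f t y - bar q K B 1 (-1) t y) 1 (dx f t 1 - K * exp (B * t) * 1)).
    { apply (is_derive_minus (fun y => f t y) (fun y => bar q K B 1 (-1) t y)).
      apply Derive_correct; exact D1. apply bar_dx. }
    assert (Hr := right_test (fun y => f t y - bar q K B 1 (-1) t y) 1 _ a Ha ltac:(intros s Hs; pose proof (W1 t s Ht HtT ltac:(lra)); unfold bar in *; cbv beta; rewrite E1; replace (1 * 1 + -1) with 0 by ring; rewrite Rmult_0_r; lra) Hd).
    lra.
  - assert (Hd : is_derive (fun y => f t y - bar p K B (-1) a t y) a (dx f t a - K * exp (B * t) * -1)).
    { apply (is_derive_minus (fun y => f t y) (fun y => bar p K B (-1) a t y)).
      apply Derive_correct; exact Da. apply bar_dx. }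
    assert (Hr := left_test (fun y => f t y - bar p K B (-1) a t y) a _ 1 Ha ltac:(intros s Hs; pose proof (W2 t s Ht HtT ltac:(lra)); unfold bar in *; cbv beta; rewrite Ea; replace (-1 * a + a) with 0 by ring; rewrite Rmult_0_r; lra) Hd).
    lra.
Qed.

Lemma dx_neg f t x : dx (fun t x => - f t x) t x = - dx f t x.
Proof. unfold dx. apply Derive_opp. Qed.

Lemma dxx_neg f t x : dxx (fun t x => - f t x) t x = - dxx f t x.
Proof.
  unfold dxx. rewrite (Derive_ext _ (fun y => - dx f t y)) by (intros; apply dx_neg).
  apply Derive_opp.
Qed.

Lemma dt_neg f t x : dt (fun t x => - f t x) t x = - dt f t x.
Proof. unfold dt. apply Derive_opp. Qed.

Lemma cont2_neg g g' t x : (forall t x, g' t x = - g t x) -> cont2 g t x -> cont2 g' t x.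
Proof.
  intros E H. unfold cont2 in *.
  apply (continuous_ext (fun p : R * R => opp (g (fst p) (snd p)))).
  - intros [u v]. simpl. rewrite E. reflexivity.
  - apply (continuous_opp (fun p : R * R => g (fst p) (snd p))). exact H.
Qed.

Lemma sol_neg n a p q phi T f : is_LMCF_solution n a p q phi T f ->
  is_LMCF_solution n a (- p) (- q) phi T (fun t x => - f t x).
Proof.
  intros Hsol t x Ht HT Hx.
  destruct (Hsol t x Ht HT Hx) as [D1 [D2 [D3 [C1 [C2 [C3 [C4 [Eq [E1 Ea]]]]]]]]].
  split; [apply (ex_derive_opp (fun s => f s x)); exact D1|].
  split; [apply (ex_derive_opp (fun y => f t y)); exact D2|].
  split.
  { apply (ex_derive_ext (fun y => opp (dx f t y))).
    intros; rewrite dx_neg; reflexivity.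
    apply (ex_derive_opp (fun y => dx f t y)); exact D3. }
  split; [apply (cont2_neg f); [reflexivity | exact C1]|].
  split; [apply (cont2_neg (dt f)); [intros; apply dt_neg | exact C2]|].
  split; [apply (cont2_neg (dx f)); [intros; apply dx_neg | exact C3]|].
  split; [apply (cont2_neg (dxx f)); [intros; apply dxx_neg | exact C4]|].
  split; [|split; [rewrite E1; reflexivity | rewrite Ea; reflexivity]].
  rewrite dt_neg, dx_neg, dxx_neg, Eq.
  replace ((- dx f t x) ^ 2) with (dx f t x ^ 2) by ring.
  replace ((- f t x) ^ 2) with (f t x ^ 2) by ring.
  unfold Rdiv. ring.
Qed.

Theorem proposition4p1 (n : nat) (a p q : R) (phi : R -> R) (T : Rbar)
    (f : R -> R -> R) :
  (2 <= n)%nat -> 1 < a -> legendre_u2 a phi ->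
  is_LMCF_solution n a p q phi T f ->
  exists A B : R, forall t : R, 0 <= t -> Rbar_lt (Finite t) T ->
    Rabs (dx f t 1) + Rabs (dx f t a) <= A * exp (B * t).
Proof.
  intros Hn Ha Hphi Hsol.
  destruct (classic (Rbar_lt 0 T)) as [HT|HT].
  2:{ exists 0, 0. intros t Ht HtT. exfalso. apply HT.
      apply Rbar_le_lt_trans with t; [simpl; exact Ht | exact HtT]. }
  destruct (onesided n a p q phi T f Hn Ha Hphi Hsol HT) as [K1 [B1 [HK1 [HB1 H1]]]].
  destruct (onesided n a (-p) (-q) phi T (fun t x => - f t x) Hn Ha Hphi (sol_neg _ _ _ _ _ _ _ Hsol) HT)
    as [K2 [B2 [HK2 [HB2 H2]]]].
  exists (2 * Rmax K1 K2), (Rmax B1 B2).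
  intros t Ht HtT.
  destruct (H1 t Ht HtT) as [U1 Ua].
  destruct (H2 t Ht HtT) as [V1 Va]. rewrite !dx_neg in *.
  set (K := Rmax K1 K2). set (B := Rmax B1 B2).
  assert (E1 : K1 * exp (B1 * t) <= K * exp (B * t)).
  { apply Rmult_le_compat; [lra | left; apply exp_pos | apply Rmax_l |].
    apply exp_mono. apply Rmult_le_compat_r; [lra | apply Rmax_l]. }
  assert (E2 : K2 * exp (B2 * t) <= K * exp (B * t)).
  { apply Rmult_le_compat; [lra | left; apply exp_pos | apply Rmax_r |].
    apply exp_mono. apply Rmult_le_compat_r; [lra | apply Rmax_r]. }
  assert (Rabs (dx f t 1) <= K * exp (B * t)) by (apply Rabs_le; lra).
  assert (Rabs (dx f t a) <= K * exp (B * t)) by (apply Rabs_le; lra).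
  lra.
Qed.
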